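(* Let $\langle\vec l,\vec c\rangle$ be an SS-uniformizable ladder system coloring and let $\mathbb{P}$ be a $\mathsf{stat}$-(K) poset. Then $\mathbb{P}$ forces that $\langle\vec l,\vec c\rangle$ is SS-uniformizable.
   Context: A ladder system is $\vec l=\langle l_\alpha:\alpha\in\omega_1\cap\mathrm{Lim}\rangle$ with each $l_\alpha\subseteq\alpha$ cofinal in $\alpha$ of order type $\omega$; $l_{\alpha,n}$ is the $n$-th element of $l_\alpha$ and $l_\alpha^n=\{l_{\alpha,m}:m\ge n\}$. A ladder system coloring is $\langle\vec l,\vec c\rangle$ with $\vec c=\langle c_\alpha:l_\alpha\to\omega\rangle$; it is uniformized on $S\subseteq\omega_1\cap\mathrm{Lim}$ if there is $k:S\to\omega$ with $\bigcup_{\alpha\in S}c_\alpha\restriction l_\alpha^{k(\alpha)}$ a function. It is SS-uniformizable if for every stationary $E\subseteq\omega_1$ it is uniformized on $E'\cap\mathrm{Lim}$ for some stationary $E'\subseteq E$. A poset is $\mathsf{stat}$-(K) if for every stationary $S\subseteq\omega_1$ and every $\langle p_\alpha:\alpha\in S\rangle$ there is a stationary $S'\subseteq S$ with $\{p_\alpha:\alpha\in S'\}$ linked (pairwise compatible). *)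

(* Defs.v *)
(* Forcing is set up via the standard (Kunen-style) forcing
   relation, written as a shallow embedding: a "forced formula" is a predicate
   on conditions [P -> Prop]. *)
From Stdlib Require Import Arith.

(* [lt] is a strict well-order on [W] of order type omega_1: uncountable,
   all proper initial segments countable. *)
Definition is_omega1 {W : Type} (lt : W -> W -> Prop) : Prop :=
  (forall a, ~ lt a a) /\
  (forall a b c, lt a b -> lt b c -> lt a c) /\
  (forall a b, lt a b \/ a = b \/ lt b a) /\
  well_founded lt /\
  (forall f : W -> nat, exists a b, a <> b /\ f a = f b) /\
  (forall a, exists g : nat -> W, forall b, lt b a -> exists n, g n = b).

Definition is_limit {W : Type} (lt : W -> W -> Prop) (a : W) : Prop :=
  (exists b, lt b a) /\ (forall b, lt b a -> exists g, lt b g /\ lt g a).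

Definition unbounded {W : Type} (lt : W -> W -> Prop) (C : W -> Prop) : Prop :=
  forall b, exists g, lt b g /\ C g.

Definition closed {W : Type} (lt : W -> W -> Prop) (C : W -> Prop) : Prop :=
  forall a, is_limit lt a ->
    (forall b, lt b a -> exists g, lt b g /\ lt g a /\ C g) -> C a.

Definition club {W : Type} (lt : W -> W -> Prop) (C : W -> Prop) : Prop :=
  unbounded lt C /\ closed lt C.

Definition stationary {W : Type} (lt : W -> W -> Prop) (E : W -> Prop) : Prop :=
  forall C, club lt C -> exists a, C a /\ E a.

(* Ladder system: l a n = l_{a,n}, the n-th element of l_a (for limit a);
   l_a = {l a n | n} is strictly increasing, below a and cofinal in a,
   hence of order type omega. *)
Definition ladder_system {W : Type} (lt : W -> W -> Prop) (l : W -> nat -> W) : Prop :=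
  forall a, is_limit lt a ->
    (forall n, lt (l a n) (l a (S n))) /\
    (forall n, lt (l a n) a) /\
    (forall b, lt b a -> exists n, lt b (l a n)).

(* A coloring c_a : l_a -> omega is encoded as c : W -> nat -> nat with
   c a n = c_a(l_{a,n}). Uniformized on S by k: the union of
   c_a restricted to l_a^{k a} (a in S) is a function. *)
Definition uniformized_on {W : Type} (l : W -> nat -> W) (c : W -> nat -> nat)
  (S : W -> Prop) (k : W -> nat) : Prop :=
  forall a b m m', S a -> S b -> k a <= m -> k b <= m' ->
    l a m = l b m' -> c a m = c b m'.

Definition SS_uniformizable {W : Type} (lt : W -> W -> Prop)
  (l : W -> nat -> W) (c : W -> nat -> nat) : Prop :=
  forall E, stationary lt E ->
    exists E', (forall a, E' a -> E a) /\ stationary lt E' /\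
      exists k : W -> nat, uniformized_on l c (fun a => E' a /\ is_limit lt a) k.

(* le q p : q is stronger than (extends) p *)
Definition poset {P : Type} (le : P -> P -> Prop) : Prop :=
  (forall p, le p p) /\ (forall p q r, le p q -> le q r -> le p r) /\
  (forall p q, le p q -> le q p -> p = q).

Definition compatible {P : Type} (le : P -> P -> Prop) (p q : P) : Prop :=
  exists r, le r p /\ le r q.

Definition stat_K {W : Type} (lt : W -> W -> Prop) {P : Type} (le : P -> P -> Prop) : Prop :=
  forall S, stationary lt S -> forall p : W -> P,
    exists S', (forall a, S' a -> S a) /\ stationary lt S' /\
      forall a b, S' a -> S' b -> compatible le (p a) (p b).

(* A P-name for a subset of a ground set T: a relation name T := T -> P -> Prop,
   i.e. the set of pairs (t, p); it is interpreted as {t | exists p in G, X t p}.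
   [phi p] reads "p forces phi". *)
Definition name (P T : Type) := T -> P -> Prop.

(* p ||- t in X  iff the set of r extending some s with X t s is dense below p *)
Definition Fin {P : Type} (le : P -> P -> Prop) {T : Type} (X : name P T) (t : T) : P -> Prop :=
  fun p => forall q, le q p -> exists r, le r q /\ exists s, X t s /\ le r s.

Definition Fprop {P : Type} (Q : Prop) : P -> Prop := fun _ => Q.

Definition Fnot {P : Type} (le : P -> P -> Prop) (phi : P -> Prop) : P -> Prop :=
  fun p => forall q, le q p -> ~ phi q.

Definition Fand {P : Type} (phi psi : P -> Prop) : P -> Prop :=
  fun p => phi p /\ psi p.

Definition Fall {P : Type} {I : Type} (phi : I -> P -> Prop) : P -> Prop :=
  fun p => forall i, phi i p.

Definition Fimp {P : Type} (le : P -> P -> Prop) (phi psi : P -> Prop) : P -> Prop :=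
  Fnot le (Fand phi (Fnot le psi)).

Definition Fex {P : Type} (le : P -> P -> Prop) {I : Type} (phi : I -> P -> Prop) : P -> Prop :=
  Fnot le (Fall (fun i => Fnot le (phi i))).

Definition Fclub {W : Type} (lt : W -> W -> Prop) {P : Type} (le : P -> P -> Prop)
  (C : name P W) : P -> Prop :=
  Fand
    (Fall (fun b => Fex le (fun g => Fand (Fprop (lt b g)) (Fin le C g))))
    (Fall (fun a => Fimp le (Fprop (is_limit lt a))
       (Fimp le
          (Fall (fun b => Fimp le (Fprop (lt b a))
             (Fex le (fun g => Fand (Fprop (lt b g /\ lt g a)) (Fin le C g)))))
          (Fin le C a)))).

Definition Fstationary {W : Type} (lt : W -> W -> Prop) {P : Type} (le : P -> P -> Prop)
  (E : name P W) : P -> Prop :=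
  Fall (fun C : name P W => Fimp le (Fclub lt le C)
    (Fex le (fun a => Fand (Fin le C a) (Fin le E a)))).

Definition Fsubset {W : Type} {P : Type} (le : P -> P -> Prop) (E' E : name P W) : P -> Prop :=
  Fall (fun a => Fimp le (Fin le E' a) (Fin le E a)).

(* K (a name for a subset of W x nat) is (the graph of) a function
   k : E' cap Lim -> omega which uniformizes <l,c> on E' cap Lim *)
Definition Funiformizes {W : Type} (lt : W -> W -> Prop) {P : Type} (le : P -> P -> Prop)
  (l : W -> nat -> W) (c : W -> nat -> nat) (E' : name P W) (K : name P (W * nat)) : P -> Prop :=
  Fand
    (Fall (fun a => Fimp le (Fand (Fin le E' a) (Fprop (is_limit lt a)))
        (Fex le (fun n => Fin le K (a, n)))))
  (Fand
    (Fall (fun a => Fall (fun n => Fall (fun n' =>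
       Fimp le (Fand (Fand (Fin le E' a) (Fprop (is_limit lt a)))
                     (Fand (Fin le K (a, n)) (Fin le K (a, n'))))
         (Fprop (n = n'))))))
    (Fall (fun a => Fall (fun b => Fall (fun n => Fall (fun n' =>
       Fall (fun m => Fall (fun m' =>
       Fimp le
         (Fand (Fand (Fin le E' a) (Fprop (is_limit lt a)))
         (Fand (Fand (Fin le E' b) (Fprop (is_limit lt b)))
         (Fand (Fand (Fin le K (a, n)) (Fin le K (b, n')))
               (Fprop (n <= m /\ n' <= m' /\ l a m = l b m')))))
         (Fprop (c a m = c b m')))))))))).

Definition F_SS_uniformizable {W : Type} (lt : W -> W -> Prop) {P : Type} (le : P -> P -> Prop)
  (l : W -> nat -> W) (c : W -> nat -> nat) : P -> Prop :=
  Fall (fun E : name P W => Fimp le (Fstationary lt le E)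
    (Fex le (fun E' : name P W =>
      Fand (Fsubset le E' E)
      (Fand (Fstationary lt le E')
        (Fex le (fun K : name P (W * nat) => Funiformizes lt le l c E' K)))))).

(* Main.v *)
Require Import Defs.
From Stdlib Require Import Arith Classical ClassicalEpsilon IndefiniteDescription Cantor.

Definition cid := constructive_indefinite_description.

Lemma om_bounded {W : Type} (lt : W -> W -> Prop) :
  is_omega1 lt -> forall g : nat -> W, exists b, forall n, lt (g n) b.
Proof.
  intros [irr [tr [tri [wf [unc enum]]]]] g.
  destruct (classic (exists b, forall n, lt (g n) b)) as [H|H]; [exact H|exfalso].
  assert (Hb : forall y, exists n, y = g n \/ lt y (g n)).
  { intro y. apply NNPP; intro Hn. apply H. exists y. intro n.
    destruct (tri (g n) y) as [h|[h|h]]; [exact h| |];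
    exfalso; apply Hn; exists n; auto. }
  set (E := fun n => proj1_sig (cid _ _ (enum (g n)))).
  assert (HE : forall n b, lt b (g n) -> exists m, E n m = b).
  { intros n b hb. unfold E. destruct (cid _ _ (enum (g n))) as [e he]. simpl. auto. }
  assert (HF : forall y, exists p : nat * nat,
     (snd p = 0 /\ y = g (fst p)) \/ (exists m, snd p = S m /\ E (fst p) m = y)).
  { intro y. destruct (Hb y) as [n [h|h]].
    - exists (n, 0). left. simpl. auto.
    - destruct (HE n y h) as [m hm]. exists (n, S m). right. exists m. simpl. auto. }
  set (F := fun y => proj1_sig (cid _ _ (HF y))).
  assert (HFs : forall y, (snd (F y) = 0 /\ y = g (fst (F y))) \/
                 (exists m, snd (F y) = S m /\ E (fst (F y)) m = y)).
  { intro y. unfold F. destruct (cid _ _ (HF y)) as [p hp]. exact hp. }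
  destruct (unc (fun y => to_nat (F y))) as [a [b [hab hf]]].
  apply to_nat_inj in hf. apply hab.
  destruct (HFs a) as [[h1 h2]|[m [h1 h2]]]; destruct (HFs b) as [[h3 h4]|[m' [h3 h4]]];
    rewrite <- hf in *; try congruence.
Qed.

Lemma om_nomax {W : Type} (lt : W -> W -> Prop) :
  is_omega1 lt -> forall x, exists y, lt x y.
Proof.
  intros H x. destruct (om_bounded lt H (fun _ => x)) as [b hb]. exists b. apply (hb 0).
Qed.

Lemma wf_min {W : Type} (lt : W -> W -> Prop) : well_founded lt ->
  forall (U : W -> Prop) y, U y -> exists m, U m /\ forall z, lt z m -> ~ U z.
Proof.
  intros wf U y. induction y as [y IH] using (well_founded_ind wf). intro Uy.
  destruct (classic (exists z, lt z y /\ U z)) as [[z [h1 h2]]|h].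
  - exact (IH z h1 h2).
  - exists y. split; [exact Uy|]. intros z hz Uz. apply h. eauto.
Qed.

Lemma om_sup {W : Type} (lt : W -> W -> Prop) : is_omega1 lt ->
  forall x : nat -> W, (forall n, lt (x n) (x (S n))) ->
  exists d, (forall n, lt (x n) d) /\ (forall b, lt b d -> exists n, lt b (x n)) /\ is_limit lt d.
Proof.
  intros Hom x Hx. pose proof Hom as [irr [tr [tri [wf _]]]].
  destruct (om_bounded lt Hom x) as [b0 hb0].
  destruct (wf_min lt wf (fun d => forall n, lt (x n) d) b0 hb0) as [d [hd hmin]].
  assert (Hc : forall b, lt b d -> exists n, lt b (x n)).
  { intros b hb. pose proof (hmin b hb) as h.
    apply not_all_ex_not in h. destruct h as [n hn]. exists (S n).
    destruct (tri (x n) b) as [h|[h|h]]; [contradiction| subst; apply Hx | eauto]. }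
  exists d. split; [exact hd|]. split; [exact Hc|]. split.
  - exists (x 0). apply hd.
  - intros b hb. destruct (Hc b hb) as [n hn]. exists (x n). auto.
Qed.

Lemma club_all {W : Type} (lt : W -> W -> Prop) : is_omega1 lt -> club lt (fun _ => True).
Proof.
  intro H. split.
  - intro b. destruct (om_nomax lt H b) as [y hy]. eauto.
  - intros a _ _. exact I.
Qed.

Lemma club_tail {W : Type} (lt : W -> W -> Prop) : is_omega1 lt -> forall b, club lt (fun g => lt b g).
Proof.
  intros H b. pose proof H as [irr [tr [tri _]]]. split.
  - intro c. destruct (tri b c) as [h|[h|h]].
    + destruct (om_nomax lt H c) as [y hy]. exists y. eauto.
    + subst. destruct (om_nomax lt H c) as [y hy]. eauto.
    + destruct (om_nomax lt H b) as [y hy]. exists y. eauto.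
  - intros a [[e he] _] hc. destruct (hc e he) as [g [h1 [h2 h3]]]. eauto.
Qed.

Lemma stat_unb {W : Type} (lt : W -> W -> Prop) : is_omega1 lt ->
  forall S, stationary lt S -> forall b, exists g, lt b g /\ S g.
Proof. intros H S hS b. exact (hS _ (club_tail lt H b)). Qed.

Lemma stat_ne {W : Type} (lt : W -> W -> Prop) : is_omega1 lt ->
  forall S, stationary lt S -> exists a, S a.
Proof. intros H S hS. destruct (hS _ (club_all lt H)) as [a [_ h]]. eauto. Qed.

Lemma stat_all {W : Type} (lt : W -> W -> Prop) (b : W) : stationary lt (fun _ => True).
Proof. intros C [hu _]. destruct (hu b) as [g [_ h]]. eauto. Qed.

Lemma Fnot_down {P} (le : P -> P -> Prop) : poset le ->
  forall X p q, Fnot le X p -> le q p -> Fnot le X q.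
Proof. intros [_ [tr _]] X p q h hq r hr. apply h. eauto. Qed.

Lemma Fin_down {P} (le : P -> P -> Prop) : poset le ->
  forall T (X : name P T) t p q, Fin le X t p -> le q p -> Fin le X t q.
Proof. intros [_ [tr _]] T X t p q h hq r hr. apply h. eauto. Qed.

Lemma Fex_elim {P} (le : P -> P -> Prop) : poset le ->
  forall I (X : I -> P -> Prop) p, Fex le X p -> exists i q, le q p /\ X i q.
Proof.
  intros [rf _] I X p h. apply NNPP. intro hn. apply (h p (rf p)). intros i q hq hx.
  apply hn. eauto.
Qed.

Lemma Fex_intro {P} (le : P -> P -> Prop) :
  forall I (X : I -> P -> Prop) p,
  (forall q, le q p -> exists i r, le r q /\ X i r) -> Fex le X p.
Proof.
  intros I X p h q hq hall. destruct (h q hq) as [i [r [hr hx]]]. exact (hall i r hr hx).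
Qed.

Lemma Fimp_intro {P} (le : P -> P -> Prop) : poset le ->
  forall (A B : P -> Prop) p, (forall q, le q p -> A q -> B q) -> Fimp le A B p.
Proof.
  intros [rf _] A B p h q hq [ha hb]. exact (hb q (rf q) (h q hq ha)).
Qed.

Lemma Fimp_elim {P} (le : P -> P -> Prop) : poset le ->
  forall (A B : P -> Prop) p, Fimp le A B p -> A p -> exists q, le q p /\ B q.
Proof.
  intros [rf _] A B p h ha. apply NNPP. intro hn. apply (h p (rf p)). split; [exact ha|].
  intros q hq hb. apply hn. eauto.
Qed.

Lemma Fin_ground {P} (le : P -> P -> Prop) : poset le ->
  forall T (Q : T -> Prop) t p, Fin le (fun a (_ : P) => Q a) t p <-> Q t.
Proof.
  intros [rf _] T Q t p. split.
  - intro h. destruct (h p (rf p)) as [r [_ [s [hs _]]]]. exact hs.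
  - intros hq q hq'. exists q. split; [apply rf|]. exists q. split; [exact hq|apply rf].
Qed.

Lemma ground_club {W P} (lt : W -> W -> Prop) (le : P -> P -> Prop) : poset le ->
  forall D, club lt D -> forall p, Fclub lt le (fun a (_ : P) => D a) p.
Proof.
  intros Hp D [hu hc] p. pose proof Hp as [rf [tr _]]. split.
  - intro b. apply Fex_intro. intros q hq. destruct (hu b) as [g [h1 h2]].
    exists g, q. split; [apply rf|]. split; [exact h1|]. apply (Fin_ground le Hp). exact h2.
  - intro a. apply (Fimp_intro le Hp). intros q _ hlim.
    apply (Fimp_intro le Hp). intros q' _ hyp.
    apply (Fin_ground le Hp). apply hc; [exact hlim|].
    intros b hb. destruct (Fimp_elim le Hp _ _ _ (hyp b) hb) as [q2 [_ hq2]].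
    destruct (Fex_elim le Hp _ _ _ hq2) as [g [q3 [_ [[h1 h2] h3]]]].
    apply (Fin_ground le Hp) in h3. eauto.
Qed.

Lemma forced_club_ground {W P} (lt : W -> W -> Prop) (le : P -> P -> Prop) :
  is_omega1 lt -> poset le -> stat_K lt le ->
  forall (C : name P W) t1, Fclub lt le C t1 ->
  exists D, club lt D /\ forall d, D d -> Fin le C d t1.
Proof.
  intros Hom Hp HK C t1 [Hu Hcl].
  pose proof Hom as [irr [tr [tri _]]]. pose proof Hp as [rf [trp _]].
  set (good := fun b d => forall q, le q t1 -> exists r g, le r q /\ lt b g /\ lt g d /\ Fin le C g r).
  assert (U : forall b q, le q t1 -> exists r g, le r q /\ lt b g /\ Fin le C g r).
  { intros b q hq. pose proof (Fnot_down le Hp _ _ _ (Hu b) hq) as h.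
    destruct (Fex_elim le Hp _ _ _ h) as [g [r [hr [h1 h2]]]]. eauto. }
  assert (Hex : forall b, exists d, good b d).
  { intro b. apply NNPP. intro hn.
    assert (T : forall d, exists q, le q t1 /\
                 forall r g, le r q -> lt b g -> lt g d -> ~ Fin le C g r).
    { intro d. apply NNPP. intro hn2. apply hn. exists d. intros q hq.
      apply NNPP. intro hn3. apply hn2. exists q. split; [exact hq|].
      intros r g h1 h2 h3 h4. apply hn3. eauto 7. }
    assert (T2 : forall d, exists pr : P * W,
        le (fst pr) t1 /\ lt b (snd pr) /\ Fin le C (snd pr) (fst pr) /\
        forall r g, le r (fst pr) -> lt b g -> lt g d -> ~ Fin le C g r).
    { intro d. destruct (T d) as [q [hq hq2]]. destruct (U b q hq) as [r [g [h1 [h2 h3]]]].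
      exists (r, g). simpl. split; [eauto|]. split; [exact h2|]. split; [exact h3|].
      intros r' g' h4 h5 h6. apply hq2; eauto. }
    set (f := fun d => proj1_sig (cid _ _ (T2 d))).
    assert (Hf : forall d, le (fst (f d)) t1 /\ lt b (snd (f d)) /\ Fin le C (snd (f d)) (fst (f d)) /\
        forall r g, le r (fst (f d)) -> lt b g -> lt g d -> ~ Fin le C g r).
    { intro d. unfold f. destruct (cid _ _ (T2 d)) as [pr hpr]. exact hpr. }
    destruct (HK _ (stat_all lt b) (fun d => fst (f d))) as [S' [_ [hS' hcomp]]].
    destruct (stat_ne lt Hom S' hS') as [d hd].
    destruct (stat_unb lt Hom S' hS' (snd (f d))) as [d' [hdd' hd']].
    destruct (hcomp d d' hd hd') as [u [hu1 hu2]].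
    destruct (Hf d) as [_ [h1 [h2 _]]]. destruct (Hf d') as [_ [_ [_ h4]]].
    exact (h4 u (snd (f d)) hu2 h1 hdd' (Fin_down le Hp _ _ _ _ _ h2 hu1)). }
  set (h := fun b => proj1_sig (cid _ _ (Hex b))).
  assert (Hh : forall b, good b (h b)).
  { intro b. unfold h. destruct (cid _ _ (Hex b)) as [d hd]. exact hd. }
  assert (good_mono : forall b d d', good b d -> lt d d' -> good b d').
  { intros b d d' hg hdd q hq. destruct (hg q hq) as [r [g [h1 [h2 [h3 h4]]]]]. eauto 7. }
  assert (h_gt : forall b, lt b (h b)).
  { intro b. destruct (Hh b t1 (rf t1)) as [r [g [_ [h1 [h2 _]]]]]. eauto. }
  exists (fun d => is_limit lt d /\ forall b, lt b d -> good b d). split; [split|].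
  - intro b. set (x := fun n => Nat.iter n h b).
    assert (hx : forall n, lt (x n) (x (S n))) by (intro n; apply h_gt).
    destruct (om_sup lt Hom x hx) as [d [hd1 [hd2 hd3]]].
    exists d. split; [exact (hd1 0)|]. split; [exact hd3|].
    intros b' hb'. destruct (hd2 b' hb') as [n hn].
    intros q hq. destruct (Hh (x n) q hq) as [r [g [h1 [h2 [h3 h4]]]]].
    exists r, g. split; [exact h1|]. split; [eauto|]. split; [|exact h4].
    apply tr with (x (S n)); [exact h3|apply hd1].
  - intros a hlim hc. split; [exact hlim|]. intros b hb.
    destruct (hc b hb) as [g [h1 [h2 [_ h3]]]]. exact (good_mono b g a (h3 b h1) h2).
  - intros d [hlim hgood] q hq. apply NNPP. intro hn.
    assert (Hnf : Fnot le (Fin le C d) q).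
    { intros q' hq' hf. apply hn. destruct (hf q' (rf q')) as [r [h1 h2]]. eauto. }
    destruct (Fimp_elim le Hp _ _ _ (Fnot_down le Hp _ _ _ (Hcl d) hq) hlim) as [q' [hq' hi]].
    apply (hi q' (rf q')). split.
    + intro b. apply (Fimp_intro le Hp). intros q2 hq2 hb.
      apply Fex_intro. intros q3 hq3.
      assert (hq3t : le q3 t1) by eauto.
      destruct (hgood b hb q3 hq3t) as [r [g [h1 [h2 [h3 h4]]]]].
      exists g, r. split; [exact h1|]. split; [split; assumption|exact h4].
    + exact (Fnot_down le Hp _ _ _ Hnf hq').
Qed.

Theorem lemma4 (W : Type) (lt : W -> W -> Prop) (P : Type) (le : P -> P -> Prop)
  (l : W -> nat -> W) (c : W -> nat -> nat) :
  is_omega1 lt ->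
  ladder_system lt l ->
  SS_uniformizable lt l c ->
  poset le ->
  stat_K lt le ->
  forall p : P, F_SS_uniformizable lt le l c p.
Proof.
  intros Hom Hlad HSS Hp HK p E.
  pose proof Hp as [rf [trp _]]. pose proof Hom as [irr [tr [tri _]]].
  intros q hq [Hst Hn].
  assert (Hq1 : exists q1, le q1 q /\ forall E' t, le t q1 ->
     ~ (Fand (Fsubset le E' E) (Fand (Fstationary lt le E')
         (Fex le (fun K : name P (W * nat) => Funiformizes lt le l c E' K)))) t).
  { apply NNPP. intro hn. apply (Hn q (rf q)). intros q1 hq1 hall.
    apply hn. exists q1. split; [exact hq1|]. intros E' t ht hphi. exact (hall E' t ht hphi). }
  destruct Hq1 as [q1 [hq1 Hno]].
  assert (Hst1 : Fstationary lt le E q1).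
  { intro C. exact (Fnot_down le Hp _ _ _ (Hst C) hq1). }
  set (Estar := fun a => exists r, le r q1 /\ Fin le E a r).
  assert (HEs : stationary lt Estar).
  { intros D0 hD0.
    destruct (Fimp_elim le Hp _ _ _ (Hst1 (fun a _ => D0 a)) (ground_club lt le Hp D0 hD0 q1))
      as [q2 [hq2 hex]].
    destruct (Fex_elim le Hp _ _ _ hex) as [a [q3 [hq3 [h1 h2]]]].
    apply (Fin_ground le Hp) in h1. exists a. split; [exact h1|]. exists q3. split; [eauto|exact h2]. }
  destruct (HSS Estar HEs) as [E1 [hE1 [hE1st [k hk]]]].
  assert (Hr : forall a, exists r, Estar a -> le r q1 /\ Fin le E a r).
  { intro a. destruct (classic (Estar a)) as [[r hr]|hn']; [exists r; auto|exists q1; tauto]. }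
  set (r := fun a => proj1_sig (cid _ _ (Hr a))).
  assert (Hrs : forall a, Estar a -> le (r a) q1 /\ Fin le E a (r a)).
  { intro a. unfold r. destruct (cid _ _ (Hr a)) as [x hx]. exact hx. }
  set (E' := fun a (s : P) => E1 a /\ s = r a).
  set (K := fun (an : W * nat) (_ : P) => snd an = k (fst an)).
  assert (E'elim : forall a t, Fin le E' a t -> E1 a).
  { intros a t h. destruct (h t (rf t)) as [_ [_ [s [[hs _] _]]]]. exact hs. }
  assert (E'intro : forall a t, E1 a -> le t (r a) -> Fin le E' a t).
  { intros a t h ht q' hq'. exists q'. split; [apply rf|]. exists (r a). split; [split; auto|eauto]. }
  assert (Kelim : forall a n t, Fin le K (a, n) t -> n = k a).
  { intros a n t h. destruct (h t (rf t)) as [_ [_ [s [hs _]]]]. exact hs. }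
  assert (Kintro : forall a t, Fin le K (a, k a) t).
  { intros a t q' hq'. exists q'. split; [apply rf|]. exists q'. split; [reflexivity|apply rf]. }
  assert (Hsub : forall t, Fsubset le E' E t).
  { intros t a. apply (Fimp_intro le Hp). intros q' _ hin q2 hq2.
    destruct (hin q2 hq2) as [r0 [hr0 [s [[hs1 hs2] hs3]]]]. subst s.
    destruct (Hrs a (hE1 a hs1)) as [_ hf].
    destruct (hf r0 hs3) as [r1 [hr1 hr1']]. exists r1. split; [eauto|exact hr1']. }
  assert (Hunif : forall t, Funiformizes lt le l c E' K t).
  { intro t. split; [|split].
    - intro a. apply (Fimp_intro le Hp). intros q' _ _. apply Fex_intro. intros q2 _.
      exists (k a), q2. split; [apply rf|apply Kintro].
    - intros a n n'. apply (Fimp_intro le Hp). intros q' _ [_ [h1 h2]].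
      apply Kelim in h1. apply Kelim in h2. red. congruence.
    - intros a b n n' m m'. apply (Fimp_intro le Hp).
      intros q' _ [[ha hla] [[hb hlb] [[hn1 hn2] [h1 [h2 h3]]]]].
      apply Kelim in hn1. apply Kelim in hn2. subst n n'. red.
      apply (hk a b m m'); auto; split; eauto. }
  assert (HnotSt : forall t, le t q1 -> ~ Fstationary lt le E' t).
  { intros t ht hst. apply (Hno E' t ht). split; [apply Hsub|]. split; [exact hst|].
    apply Fex_intro. intros q' _. exists K, q'. split; [apply rf|apply Hunif]. }
  assert (Hbad : forall a, exists pr : name P W * P, E1 a ->
     le (snd pr) (r a) /\ Fclub lt le (fst pr) (snd pr) /\
     forall t2 b, le t2 (snd pr) -> ~ (Fin le (fst pr) b t2 /\ Fin le E' b t2)).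
  { intro a. destruct (classic (E1 a)) as [ha|ha]; [|exists (fun _ _ => True, q1); tauto].
    destruct (Hrs a (hE1 a ha)) as [hra _].
    pose proof (HnotSt (r a) hra) as hns.
    apply not_all_ex_not in hns. destruct hns as [C hC].
    apply NNPP. intro hn'. apply hC. intros t1 ht1 [hcl hnf].
    apply hn'. exists (C, t1). intros _. simpl. split; [exact ht1|]. split; [exact hcl|].
    intros t2 b ht2 [hb1 hb2]. apply (hnf t2 ht2). apply Fex_intro. intros q3 hq3.
    exists b, q3. split; [apply rf|]. split; eapply Fin_down; eauto. }
  set (bad := fun a => proj1_sig (cid _ _ (Hbad a))).
  assert (Hbs : forall a, E1 a ->
     le (snd (bad a)) (r a) /\ Fclub lt le (fst (bad a)) (snd (bad a)) /\
     forall t2 b, le t2 (snd (bad a)) -> ~ (Fin le (fst (bad a)) b t2 /\ Fin le E' b t2)).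
  { intro a. unfold bad. destruct (cid _ _ (Hbad a)) as [x hx]. exact hx. }
  destruct (HK E1 hE1st (fun a => snd (bad a))) as [E3 [hE3 [hE3st hcomp]]].
  destruct (stat_ne lt Hom E3 hE3st) as [a ha].
  destruct (Hbs a (hE3 a ha)) as [_ [hcla hna]].
  destruct (forced_club_ground lt le Hom Hp HK _ _ hcla) as [D [hD hDf]].
  destruct (hE3st D hD) as [b [hbD hb]].
  destruct (hcomp a b ha hb) as [u [hu1 hu2]].
  destruct (Hbs b (hE3 b hb)) as [hrb _].
  apply (hna u b hu1). split.
  - exact (Fin_down le Hp _ _ _ _ _ (hDf b hbD) hu1).
  - apply E'intro; [exact (hE3 b hb)|eauto].
Qed.
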